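(* Let $(\mathcal{H},\mathbf{a})$ be a weighted arrangement in $\mathbb{CP}^n$ with all $a_H>0$. The following are equivalent: (i) $\sum_{H\supset L}a_H<\operatorname{codim}L$ for every $L\in\mathcal{L}_{\mathrm{irr}}$; (ii) the same inequality holds for every $L\in\mathcal{L}$; (iii) the same inequality holds for every non-empty proper linear subspace $L\subsetneq\mathbb{CP}^n$.
   Context: $\mathcal{H}$ is a finite set of distinct hyperplanes in $\mathbb{CP}^n$; $\mathcal{L}$ is the set of non-empty proper intersections of members of $\mathcal{H}$. For $L\in\mathcal{L}$, the localization $\mathcal{H}_L=\{H\in\mathcal{H}:L\subset H\}$. A splitting of an arrangement $\mathcal{K}$ is a decomposition $\mathcal{K}=\mathcal{K}_1\cup\mathcal{K}_2$ whose centres (intersections of members; $\mathbb{CP}^n$ for the empty collection) $T_1,T_2$ satisfy $T_1+T_2=\mathbb{CP}^n$ (projective span); it is non-trivial if both parts are non-empty; $\mathcal{K}$ is irreducible if it has no non-trivial splitting. $L\in\mathcal{L}$ is irreducible if $\mathcal{H}_L$ is irreducible, and $\mathcal{L}_{\mathrm{irr}}$ is the set of irreducible elements of $\mathcal{L}$. *)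

(* Defs.v *)
(* Projective space CP^n is modelled by C^(n+1) = 'rV[R[i]]_(n.+1)
   with R : realType (so R[i] is the complex numbers); a projective linear subspace
   is a vector subspace, projective emptiness = the zero subspace. *)
From HB Require Import structures.
From mathcomp Require Import all_boot all_order all_algebra.
From mathcomp Require Import reals.
From mathcomp Require Import complex.
Set Implicit Arguments. Unset Strict Implicit. Unset Printing Implicit Defensive.
Import Order.TTheory GRing.Theory Num.Theory.
Local Open Scope ring_scope.

Section Arr.
Variables (R : realType) (n m : nat).
Notation C := (R[i])%C.
Notation V := 'rV[C]_(n.+1).

Definition is_hyperplane (H : {vspace V}) : Prop := \dim H = n.

(* codimension of a non-empty projective subspace L (L <> 0) *)
Definition codim (L : {vspace V}) : nat := (n.+1 - \dim L)%N.

(* centre of a collection of hyperplanes indexed by S (fullv for S empty) *)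
Definition centre (Hs : 'I_m -> {vspace V}) (S : {set 'I_m}) : {vspace V} :=
  (\bigcap_(i in S) Hs i)%VS.

Definition in_L (Hs : 'I_m -> {vspace V}) (L : {vspace V}) : Prop :=
  exists S : {set 'I_m}, S != set0 /\ L = centre Hs S /\ L != 0%VS /\ L != fullv.

Definition loc (Hs : 'I_m -> {vspace V}) (L : {vspace V}) : {set 'I_m} :=
  [set i | (L <= Hs i)%VS].

(* splitting of the sub-arrangement K: K = K1 u K2 (a decomposition),
   with T1 + T2 = CP^n (projective span = sum of vector subspaces) *)
Definition splitting (Hs : 'I_m -> {vspace V}) (K K1 K2 : {set 'I_m}) : Prop :=
  K1 :|: K2 = K /\ [disjoint K1 & K2] /\
  (centre Hs K1 + centre Hs K2)%VS = fullv.

Definition irreducible_arr (Hs : 'I_m -> {vspace V}) (K : {set 'I_m}) : Prop :=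
  ~ exists K1 K2, splitting Hs K K1 K2 /\ K1 != set0 /\ K2 != set0.

Definition in_Lirr (Hs : 'I_m -> {vspace V}) (L : {vspace V}) : Prop :=
  in_L Hs L /\ irreducible_arr Hs (loc Hs L).

Definition wsum (Hs : 'I_m -> {vspace V}) (a : 'I_m -> R) (L : {vspace V}) : R :=
  \sum_(i < m | (L <= Hs i)%VS) a i.

End Arr.

(* Main.v *)
Require Import Defs.
From HB Require Import structures.
From mathcomp Require Import all_boot all_order all_algebra.
From mathcomp Require Import reals.
From mathcomp Require Import complex.
From mathcomp Require Import zify.
From Stdlib Require Import Classical.
Set Implicit Arguments. Unset Strict Implicit. Unset Printing Implicit Defensive.
Import Order.TTheory GRing.Theory Num.Theory.
Local Open Scope ring_scope.

Lemma dimfull (R : realType) (n : nat) :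
  \dim (fullv : {vspace 'rV[R[i]%C]_(n.+1)}) = n.+1.
Proof. by rewrite dimvf /dim /= mul1n. Qed.

Lemma dimle (R : realType) (n : nat) (U : {vspace 'rV[R[i]%C]_(n.+1)}) :
  (\dim U <= n.+1)%N.
Proof. by have := dimvS (subvf U); rewrite dimfull. Qed.

Lemma wsumE (R : realType) (n m : nat)
  (Hs : 'I_m -> {vspace 'rV[R[i]%C]_(n.+1)}) (a : 'I_m -> R) L :
  wsum Hs a L = \sum_(i in loc Hs L) a i.
Proof. by rewrite /wsum /loc; apply: eq_bigl => i; rewrite inE. Qed.

Lemma centre_le_hyp (R : realType) (n m : nat)
  (Hs : 'I_m -> {vspace 'rV[R[i]%C]_(n.+1)}) (S : {set 'I_m}) j :
  (forall j, is_hyperplane (Hs j)) -> j \in S -> (\dim (centre Hs S) <= n)%N.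
Proof.
move=> hyp jS; have := dimvS (@bigcapv_inf _ _ _ j (fun i => i \in S) Hs _ jS (subvv (Hs j))); rewrite (hyp j); exact.
Qed.

Lemma centre_loc (R : realType) (n m : nat)
  (Hs : 'I_m -> {vspace 'rV[R[i]%C]_(n.+1)}) L :
  in_L Hs L -> centre Hs (loc Hs L) = L.
Proof.
move=> [S [_ [-> _]]]; apply/eqP; rewrite eqEsubv; apply/andP; split.
  apply/subv_bigcapP => i iS.
  have iL : i \in loc Hs (centre Hs S).
    by rewrite inE; exact: (@bigcapv_inf _ _ _ i (fun k => k \in S) Hs _ iS (subvv _)).
  exact: (@bigcapv_inf _ _ _ i (fun k => k \in loc Hs (centre Hs S)) Hs _ iL (subvv _)).
by apply/subv_bigcapP => i; rewrite inE.
Qed.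

Lemma ii_of_i (R : realType) (n m : nat)
  (Hs : 'I_m -> {vspace 'rV[R[i]%C]_(n.+1)}) (a : 'I_m -> R) :
  (forall j, is_hyperplane (Hs j)) ->
  (forall j, 0 < a j) ->
  (forall L, in_Lirr Hs L -> wsum Hs a L < (codim L)%:R) ->
  forall k L, (codim L <= k)%N -> in_L Hs L -> wsum Hs a L < (codim L)%:R.
Proof.
move=> hyp apos hi; elim=> [|k IH] L ck inL.
  exfalso; move: inL => [S [_ [_ [_ nf]]]].
  move: nf; rewrite eqEdim subvf /= dimfull.
  move: ck; rewrite /codim; have := dimle (centre Hs S); lia.
case: (classic (irreducible_arr Hs (loc Hs L))) => [irr|red].
  by apply: hi.
move/NNPP: red => [K1 [K2 [[eU [dis sp]] [n1 n2]]]].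
have cL := centre_loc inL.
set T1 := centre Hs K1; set T2 := centre Hs K2.
have eL : L = (T1 :&: T2)%VS.
  by rewrite -{1}cL -eU /centre big_setU //; exact: capvv.
have dimsum := dimv_sum_cap T1 T2.
rewrite sp dimfull -eL in dimsum.
have [j1 j1K] := set0Pn _ n1; have [j2 j2K] := set0Pn _ n2.
have d1 := centre_le_hyp hyp j1K; have d2 := centre_le_hyp hyp j2K.
have L0 : L != 0%VS by case: inL => [S [_ [_ [? _]]]].
have inT (K : {set 'I_m}) j : j \in K -> (L <= centre Hs K)%VS -> in_L Hs (centre Hs K).
  move=> jK LK; exists K; split; first by apply/set0Pn; exists j.
  split=> //; split.
    by apply: contra L0 => /eqP e; rewrite -subv0 -e.
  rewrite eqEdim subvf /= dimfull; have := centre_le_hyp hyp jK; lia.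
have i1 := inT K1 j1 j1K (eq_ind_r (fun X => (X <= T1)%VS) (capvSl T1 T2) eL).
have i2 := inT K2 j2 j2K (eq_ind_r (fun X => (X <= T2)%VS) (capvSr T1 T2) eL).
have cod : codim L = (codim T1 + codim T2)%N.
  rewrite /codim; have := dimle T1; have := dimle T2; lia.
have c1 : (codim T1 <= k)%N.
  move: ck d1 d2; rewrite cod /codim /T1 /T2; have := dimle (centre Hs K1); have := dimle (centre Hs K2); lia.
have c2 : (codim T2 <= k)%N.
  move: ck d1 d2; rewrite cod /codim /T1 /T2; have := dimle (centre Hs K1); have := dimle (centre Hs K2); lia.
have h1 := IH T1 c1 i1.
have h2 := IH T2 c2 i2.
have sub (K : {set 'I_m}) : \sum_(i in K) a i <= wsum Hs a (centre Hs K).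
  rewrite wsumE [X in _ <= X]big_mkcond [X in X <= _]big_mkcond /=.
  apply: ler_sum => i _; case: ifP => iK.
    rewrite ifT // inE.
    exact: (@bigcapv_inf _ _ _ i (fun k => k \in K) Hs _ iK (subvv _)).
  by case: ifP => _ //; exact: ltW.
rewrite wsumE -eU (eq_bigl [predU K1 & K2]); last by move=> i; rewrite !inE.
rewrite bigU // cod natrD.
apply: (le_lt_trans (lerD (sub K1) (sub K2))).
exact: ltrD.
Qed.

Unset Implicit Arguments.

Theorem lemma2p17 (R : realType) (n m : nat)
  (Hs : 'I_m -> {vspace 'rV[R[i]%C]_(n.+1)}) (a : 'I_m -> R) :
  injective Hs ->
  (forall j, is_hyperplane (Hs j)) ->
  (forall j, 0 < a j) ->
  [/\ ((forall L, in_Lirr Hs L -> wsum Hs a L < (codim L)%:R) <->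
       (forall L, in_L Hs L -> wsum Hs a L < (codim L)%:R)),
      ((forall L, in_L Hs L -> wsum Hs a L < (codim L)%:R) <->
       (forall L : {vspace 'rV[R[i]%C]_(n.+1)}, L != 0%VS -> L != fullv ->
          wsum Hs a L < (codim L)%:R)) &
      ((forall L, in_Lirr Hs L -> wsum Hs a L < (codim L)%:R) <->
       (forall L : {vspace 'rV[R[i]%C]_(n.+1)}, L != 0%VS -> L != fullv ->
          wsum Hs a L < (codim L)%:R))].
Proof.
move=> _ hyp apos.
have i2ii : (forall L, in_Lirr Hs L -> wsum Hs a L < (codim L)%:R) ->
    forall L, in_L Hs L -> wsum Hs a L < (codim L)%:R.
  by move=> h L inL; apply: (ii_of_i hyp apos h (leqnn (codim L)) inL).
have ii2i : (forall L, in_L Hs L -> wsum Hs a L < (codim L)%:R) ->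
    forall L, in_Lirr Hs L -> wsum Hs a L < (codim L)%:R.
  by move=> h L [inL _]; exact: h.
have iii2ii : (forall L : {vspace 'rV[R[i]%C]_(n.+1)}, L != 0%VS -> L != fullv ->
          wsum Hs a L < (codim L)%:R) ->
    forall L, in_L Hs L -> wsum Hs a L < (codim L)%:R.
  by move=> h L [S [_ [_ [L0 Lf]]]]; exact: h.
have ii2iii : (forall L, in_L Hs L -> wsum Hs a L < (codim L)%:R) ->
    (forall L : {vspace 'rV[R[i]%C]_(n.+1)}, L != 0%VS -> L != fullv ->
          wsum Hs a L < (codim L)%:R).
  move=> h L L0 Lf; case: (boolP (loc Hs L == set0)) => [/eqP e|ne].
    rewrite wsumE e big_set0 ltr0n /codim.
    by move: Lf; rewrite eqEdim subvf /= dimfull; have := dimle L; lia.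
  set L' := centre Hs (loc Hs L).
  have LL' : (L <= L')%VS by apply/subv_bigcapP => i; rewrite inE.
  have [j jS] := set0Pn _ ne.
  have dj := centre_le_hyp hyp jS.
  have inL' : in_L Hs L'.
    exists (loc Hs L); split => //; split => //; split.
      by apply: contra L0 => /eqP e; rewrite -subv0 -e.
    by rewrite eqEdim subvf /= dimfull; move: dj; rewrite -/L'; lia.
  have eq : wsum Hs a L = wsum Hs a L'.
    rewrite /wsum; apply: eq_bigl => i; apply/idP/idP => H.
      by apply: (@bigcapv_inf _ _ _ i (fun k => k \in loc Hs L) Hs _ _ (subvv _)); rewrite inE.
    exact: subv_trans LL' H.
  rewrite eq; apply: lt_le_trans (h _ inL') _; rewrite ler_nat /codim.
  by have := dimvS LL'; lia.
split; split.
- exact: i2ii.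
- exact: ii2i.
- exact: ii2iii.
- exact: iii2ii.
- by move=> h; apply: ii2iii; apply: i2ii.
- by move=> h; apply: ii2i; apply: iii2ii.
Qed.
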